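(* Let $\Omega\subset\mathbb{R}^2$ be a compact set that can be covered by at most $|\Omega|+\epsilon_1$ squares $Q_1(m)$, $m\in\mathbb{Z}^2$, for some $\epsilon_1\ge0$. Let $\Lambda_\Omega=\{\lambda_j\}_{j=1}^r$ be a finite sequence of independent and identically distributed random variables uniformly distributed in $\Omega$, let $N_0=\sup_{m\in\mathbb{Z}^2}\#(\Lambda_\Omega\cap Q_1(m))$, and let $a>|\Omega|^{-1}$. Then $$\mathbb{P}(N_0>ar)\le(|\Omega|+\epsilon_1)\exp\Big(-r\big(a\ln(a|\Omega|)-(a-|\Omega|^{-1})\big)\Big).$$
   Context: $Q_1(m)=[m_1-\tfrac12,m_1+\tfrac12]\times[m_2-\tfrac12,m_2+\tfrac12]$ for $m=(m_1,m_2)\in\mathbb{Z}^2$; $|\Omega|$ is the Lebesgue measure of $\Omega$. *)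

(* Defs.v *)
From HB Require Import structures.
From mathcomp Require Import all_boot all_order all_algebra.
From mathcomp Require Import all_classical all_reals all_analysis.
Set Implicit Arguments. Unset Strict Implicit. Unset Printing Implicit Defensive.
Import Order.TTheory GRing.Theory Num.Theory.
Import numFieldNormedType.Exports.
Local Open Scope classical_set_scope.
Local Open Scope ring_scope.

Definition leb2 (R : realType) : set (R * R) -> \bar R :=
  ((@lebesgue_measure R) \x (@lebesgue_measure R))%E.

(* |Omega| as a real number (finite for the compact sets considered). *)
Definition area (R : realType) (A : set (R * R)) : R := fine (leb2 A).

Definition Q1 (R : realType) (m : int * int) : set (R * R) :=
  [set x | (m.1%:~R - 2^-1 <= x.1 <= m.1%:~R + 2^-1) /\
           (m.2%:~R - 2^-1 <= x.2 <= m.2%:~R + 2^-1)].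

Definition covered_by_at_most (R : realType) (Omega : set (R * R)) (K : R) :=
  exists M : seq (int * int),
    Omega `<=` \bigcup_(m in [set m | m \in M]) @Q1 R m /\ (size M)%:R <= K.

Definition count_in (R : realType) (T : Type) (r : nat)
  (lam : 'I_r -> T -> R * R) (m : int * int) (w : T) : nat :=
  #|[set j : 'I_r | `[< @Q1 R m (lam j w) >] ]|.

Definition N0 (R : realType) (T : Type) (r : nat)
  (lam : 'I_r -> T -> R * R) (w : T) : R :=
  sup [set (count_in lam m w)%:R | m in [set: int * int]].

Definition uniform_in (R : realType) d (T : measurableType d)
  (P : probability T R) (X : T -> R * R) (Omega : set (R * R)) :=
  measurable_fun setT X /\
  forall A : set (R * R), measurable A ->
    P (X @^-1` A) = (area (A `&` Omega) / area Omega)%:E.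

Definition mutually_independent (R : realType) d (T : measurableType d)
  (P : probability T R) (r : nat) (lam : 'I_r -> T -> R * R) :=
  forall B : 'I_r -> set (R * R), (forall j, measurable (B j)) ->
    P [set w | forall j, B j (lam j w)] =
    (\prod_(j < r) fine (P (lam j @^-1` B j)))%:E.

(* Main.v *)
Require Import Defs.
From HB Require Import structures.
From mathcomp Require Import all_boot all_order all_algebra.
From mathcomp Require Import all_classical all_reals all_analysis.
Import Order.TTheory GRing.Theory Num.Theory.
Import numFieldNormedType.Exports.
Local Open Scope classical_set_scope.
Local Open Scope ring_scope.
From mathcomp Require Import zify ring lra.
Lemma bigU_mem (T : Type) (I : eqType) (s : seq I) (Pr : pred I) (F : I -> set T) x :
  (\big[setU/set0]_(i <- s | Pr i) F i) x <-> exists i, [/\ i \in s, Pr i & F i x].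
Proof.
elim: s => [|i s IH]; first by rewrite big_nil; split=> // -[i []].
rewrite big_cons; case: ifPn => Pi.
  split.
    case=> [Fx|/IH [k [ks Pk Fk]]]; first by exists i; rewrite mem_head.
    by exists k; rewrite inE ks orbT.
  case=> k []; rewrite inE => /orP [/eqP->|ks] Pk Fk; first by left.
  by right; apply/IH; exists k.
split.
  move/IH => [k [ks Pk Fk]]; exists k; split => //; by rewrite inE ks orbT.
case=> k [ks Pk Fk]; apply/IH; exists k; split => //.
move: ks; rewrite inE => /orP [/eqP kE|//]; by move: Pi; rewrite -kE Pk.
Qed.

Lemma bigI_mem (T : Type) (I : eqType) (s : seq I) (F : I -> set T) x :
  (\big[setI/setT]_(i <- s) F i) x <-> forall i, i \in s -> F i x.
Proof.
elim: s => [|i s IH]; first by rewrite big_nil.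
rewrite big_cons; split.
  by case=> Fi /IH H k; rewrite inE => /orP [/eqP->|/H].
move=> H; split; first by apply: H; rewrite mem_head.
by apply/IH => k ks; apply: H; rewrite inE ks orbT.
Qed.

Lemma mu_bigU d (T : measurableType d) (R : realType) (mu : {measure set T -> \bar R})
  (I : Type) (s : seq I) (Pr : pred I) (F : I -> set T) :
  (forall i, measurable (F i)) ->
  (mu (\big[setU/set0]_(i <- s | Pr i) F i) <= \sum_(i <- s | Pr i) mu (F i))%E.
Proof.
move=> mF; elim: s => [|i s IH]; first by rewrite !big_nil measure0.
rewrite !big_cons; case: ifPn => // _.
apply: le_trans (measureU2 _ _ _) _ => //; first exact: bigsetU_measurable.
exact: leeD2l.
Qed.

Lemma leb_mono (R : realType) (A B : set R) : A `<=` B -> (lebesgue_measure A <= lebesgue_measure B)%E.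
Proof.
move=> AB.
rewrite /lebesgue_measure /lebesgue_stieltjes_measure /measure_extension.
exact: le_outer_measure.
Qed.

Lemma int_mono d (T : measurableType d) (R : realType) (mu : {measure set T -> \bar R}) (f g : T -> \bar R) :
  (forall x, 0 <= f x)%E -> (forall x, f x <= g x)%E ->
  (\int[mu]_x f x <= \int[mu]_x g x)%E.
Proof.
move=> f0 fg.
have g0 x : (0 <= g x)%E by apply: le_trans (fg x).
rewrite !ge0_integralE//.
apply: le_ereal_sup.
move=> _ [h hf <-].
exists h => // x; move: (hf x); rewrite !patchT ?inE// => /le_trans; apply; exact: fg.
Qed.

Lemma leb2_mono (R : realType) (A B : set (R * R)) : A `<=` B -> (leb2 A <= leb2 B)%E.
Proof.
move=> AB; rewrite /leb2 /product_measure1; apply: int_mono => x //.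
apply: leb_mono => y; rewrite /xsection /= !inE; exact: AB.
Qed.

Lemma Q1E (R : realType) (m : int * int) :
  @Q1 R m = [set` `[m.1%:~R - 2^-1, m.1%:~R + 2^-1]] `*` [set` `[m.2%:~R - 2^-1, m.2%:~R + 2^-1]].
Proof. by apply/seteqP; split => x /=; rewrite !in_itv /=. Qed.

Lemma Q1_meas (R : realType) m : measurable (@Q1 R m).
Proof. by rewrite Q1E; apply: measurableX; exact: measurable_itv. Qed.

Lemma leb2_Q1 (R : realType) m : leb2 (@Q1 R m) = 1%E.
Proof.
rewrite Q1E /leb2 product_measure1E; try exact: measurable_itv.
rewrite /= !lebesgue_measure_itv /= !lte_fin.
have h (c : R) : c - 2^-1 < c + 2^-1 by rewrite ltrD2l gtrN // invr_gt0.
rewrite !h -!EFinD -EFinM; congr (_%:E).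
have -> : forall c : R, c + 2^-1 + - (c - 2^-1) = 1.
  by move=> c; field.
by rewrite mul1r; field.
Qed.
Lemma chernoff_real (R : realType) (r : nat) (p t c : R) : 0 <= p -> p <= 1 -> 0 <= t ->
  \sum_(f : {ffun 'I_r -> bool} | c < #|[set j | f j]|%:R)
     \prod_(j < r) (if f j then p else 1 - p)
  <= expR (- (t * c)) * (p * expR t + (1 - p)) ^+ r.
Proof.
move=> p0 p1 t0.
set g := fun f : {ffun 'I_r -> bool} => \prod_(j < r) (if f j then p else 1 - p).
have g0 f : 0 <= g f.
  by apply: prodr_ge0 => j _; case: (f j) => //; rewrite subr_ge0.
apply: (@le_trans _ _ (\sum_(f : {ffun 'I_r -> bool}) g f * expR (t * (#|[set j | f j]|%:R - c)))).
  rewrite [X in _ <= X](bigID (fun f : {ffun 'I_r -> bool} => c < #|[set j | f j]|%:R)) /=.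
  apply: ler_wpDr.
    by apply: sumr_ge0 => f _; apply: mulr_ge0 => //; exact: expR_ge0.
  apply: ler_sum => f cf; rewrite ler_peMr //; first exact: g0.
  apply: (le_trans _ (expR_ge1Dx _)); rewrite lerDl; apply: mulr_ge0 => //.
  by rewrite subr_ge0 ltW.
have -> : \sum_(f : {ffun 'I_r -> bool}) g f * expR (t * (#|[set j | f j]|%:R - c)) =
   expR (- (t * c)) * \sum_(f : {ffun 'I_r -> bool})
      \prod_(j < r) (if f j then p * expR t else 1 - p).
  rewrite mulr_sumr; apply: eq_bigr => f _.
  rewrite mulrBr addrC expRD mulrCA; congr (_ * _).
  rewrite [t * _]mulrC expRM_natl -prodr_const big_mkcond /g -big_split /=.
  apply: eq_bigr => j _; rewrite (_ : (j \in _) = f j); last by apply/idP/idP; rewrite in_setE.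
  by case: (f j); rewrite ?mulr1.
rewrite ler_pM2l ?expR_gt0 // le_eqVlt; apply/orP; left; apply/eqP.
rewrite -(bigA_distr_bigA (fun (j : 'I_r) (b : bool) => if b then p * expR t else 1 - p)) /=.
rewrite (eq_bigr (fun _ => p * expR t + (1 - p))); last by move=> j _; rewrite big_bool.
by rewrite prodr_const card_ord.
Qed.
Definition lines (R : realType) (m : int * int) : set (R * R) :=
  [set x | x.1 = m.1%:~R - 2^-1] `|` [set x | x.1 = m.1%:~R + 2^-1] `|`
  [set x | x.2 = m.2%:~R - 2^-1] `|` [set x | x.2 = m.2%:~R + 2^-1].

Lemma int_close (R : realType) (u v : int) (y : R) :
  u%:~R - 2^-1 <= y <= u%:~R + 2^-1 -> v%:~R - 2^-1 < y < v%:~R + 2^-1 -> u = v.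
Proof.
move=> /andP [h1 h2] /andP [h3 h4].
have e1 : u%:~R < (v + 1)%:~R :> R by rewrite intrD; lra.
have e2 : v%:~R < (u + 1)%:~R :> R by rewrite intrD; lra.
rewrite ltr_int in e1; rewrite ltr_int in e2; lia.
Qed.

Lemma same_sq (R : realType) (m m' : int * int) (x : R * R) :
  @Q1 R m x -> @Q1 R m' x -> ~ @lines R m' x -> m = m'.
Proof.
case: m m' => [m1 m2] [n1 n2] [/= h1 h2] [/= h3 h4] hL.
have s1 : n1%:~R - 2^-1 < x.1 < n1%:~R + 2^-1.
  move: h3 => /andP [a b]; apply/andP; split; rewrite lt_neqAle ?a ?b andbT; apply/eqP => E; apply: hL.
    by left; left; left.
  by left; left; right.
have s2 : n2%:~R - 2^-1 < x.2 < n2%:~R + 2^-1.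
  move: h4 => /andP [a b]; apply/andP; split; rewrite lt_neqAle ?a ?b andbT; apply/eqP => E; apply: hL.
    by left; right.
  by right.
by rewrite (@int_close R _ _ _ h1 s1) (@int_close R _ _ _ h2 s2).
Qed.

Lemma leb2_lineX (R : realType) (c : R) : leb2 [set x : R * R | x.1 = c] = 0%E.
Proof.
have -> : [set x : R * R | x.1 = c] = [set c] `*` setT.
  by apply/seteqP; split => -[x y] /=; [move=> ->|case=> ->].
rewrite /leb2 product_measure1E //= lebesgue_measure_set1 mul0e //.
Qed.

Lemma leb2_lineY (R : realType) (c : R) : leb2 [set x : R * R | x.2 = c] = 0%E.
Proof.
have -> : [set x : R * R | x.2 = c] = setT `*` [set c].
  by apply/seteqP; split => -[x y] /=; [move=> ->|case=> _ ->].
rewrite /leb2 product_measure1E //= lebesgue_measure_set1 mule0 //.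
Qed.

Lemma mlineX (R : realType) (c : R) : measurable [set x : R * R | x.1 = c].
Proof.
have -> : [set x : R * R | x.1 = c] = [set c] `*` setT.
  by apply/seteqP; split => -[x y] /=; [move=> ->|case=> ->].
by apply: measurableX.
Qed.

Lemma mlineY (R : realType) (c : R) : measurable [set x : R * R | x.2 = c].
Proof.
have -> : [set x : R * R | x.2 = c] = setT `*` [set c].
  by apply/seteqP; split => -[x y] /=; [move=> ->|case=> _ ->].
by apply: measurableX.
Qed.

Lemma mlines (R : realType) m : measurable (@lines R m).
Proof.
by rewrite /lines; repeat (first [exact: mlineX | exact: mlineY | apply: measurableU]).
Qed.

Lemma mu_U0 d (T : measurableType d) (R : realType) (mu : {measure set T -> \bar R}) (A B : set T) :
  measurable A -> measurable B ->
  mu A = 0%E -> mu B = 0%E -> mu (A `|` B) = 0%E.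
Proof.
move=> mA mB hA hB; apply/eqP; rewrite eq_le measure_ge0 andbT.
have hA' : (mu A <= 0)%E by rewrite hA.
have hB' : (mu B <= 0)%E by rewrite hB.
apply: (le_trans (measureU2 mu mA mB)); rewrite -[leRHS](adde0 0%E).
by apply: leeD; [exact: hA'|exact: hB'].
Qed.

Lemma leb2_lines (R : realType) m : leb2 (@lines R m) = 0%E.
Proof.
have h1 := @leb2_lineX R (m.1%:~R - 2^-1 : R).
have h2 := @leb2_lineX R (m.1%:~R + 2^-1 : R).
have h3 := @leb2_lineY R (m.2%:~R - 2^-1 : R).
have h4 := @leb2_lineY R (m.2%:~R + 2^-1 : R).
have g1 := @mlineX R (m.1%:~R - 2^-1 : R).
have g2 := @mlineX R (m.1%:~R + 2^-1 : R).
have g3 := @mlineY R (m.2%:~R - 2^-1 : R).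
have g4 := @mlineY R (m.2%:~R + 2^-1 : R).
have g12 := measurableU _ _ g1 g2.
have g123 := measurableU _ _ g12 g3.
have h12 : leb2 ([set x : R * R | x.1 = m.1%:~R - 2^-1] `|` [set x | x.1 = m.1%:~R + 2^-1]) = 0%E.
  by apply: mu_U0.
have h123 : leb2 ([set x : R * R | x.1 = m.1%:~R - 2^-1] `|` [set x | x.1 = m.1%:~R + 2^-1]
   `|` [set x | x.2 = m.2%:~R - 2^-1]) = 0%E.
  by apply: mu_U0.
by rewrite /lines; apply: mu_U0.
Qed.

Lemma mu_bigU0 d (T : measurableType d) (R : realType) (mu : {measure set T -> \bar R})
  (I : Type) (s : seq I) (F : I -> set T) :
  (forall i, measurable (F i)) -> (forall i, mu (F i) = 0%E) ->
  mu (\big[setU/set0]_(i <- s) F i) = 0%E.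
Proof.
move=> mF F0; apply/eqP; rewrite eq_le measure_ge0 andbT.
apply: (le_trans (@mu_bigU _ _ _ mu _ s xpredT F mF)).
by rewrite big1 // => i _; rewrite F0.
Qed.

Lemma sum_const_seq (R : realType) (I : Type) (s : seq I) (c : R) :
  \sum_(i <- s) c = (size s)%:R * c.
Proof.
elim: s => [|i s IH]; first by rewrite big_nil mul0r.
by rewrite big_cons IH /= -addn1 natrD mulrDl mul1r addrC.
Qed.

Theorem lemma4p6 (R : realType) (Omega : set (R * R)) (eps1 : R)
  (d : measure_display) (T : measurableType d) (P : probability T R)
  (r : nat) (lam : 'I_r -> T -> R * R) (a : R) :
  compact Omega ->
  0 < area Omega ->
  0 <= eps1 ->
  covered_by_at_most Omega (area Omega + eps1) ->
  (forall j, uniform_in P (lam j) Omega) ->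
  mutually_independent P lam ->
  (area Omega)^-1 < a ->
  (P [set w | (a * r%:R < N0 lam w)%R] <=
  ((area Omega + eps1) *
     expR (- (r%:R * (a * ln (a * area Omega) - (a - (area Omega)^-1)))))%:E)%E.
Proof.
move=> _ A0 eps0 [M [OM sM]] hu hind aA.
set A := area Omega in A0 aA sM *.
set bound := expR (- (r%:R * (a * ln (a * A) - (a - A^-1)))).
have mpre j B : measurable B -> measurable (lam j @^-1` B).
  move=> mB; rewrite -[X in measurable X]setTI; exact: (proj1 (hu j)) measurableT B mB.
have Ai0 : 0 < A^-1 by rewrite invr_gt0.
have a0 : 0 < a by apply: lt_trans aA.
have aA1 : 1 < a * A.
  by rewrite -(mulVf (lt0r_neq0 A0)) ltr_pM2r.
have aApos : a * A \in Num.pos by rewrite posrE; apply: lt_trans aA1.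
set t := ln (a * A).
have t0 : 0 < t by apply: ln_gt0.
have et : expR t = a * A by rewrite /t lnK.
pose C m := [set w | a * r%:R < (count_in lam m w)%:R].
have chern m : measurable (C m) /\ (P (C m) <= bound%:E)%E.
  set Q := @Q1 R m.
  have mQ : measurable Q := @Q1_meas R m.
  set p := area (Q `&` Omega) / A.
  have Pj j : P (lam j @^-1` Q) = p%:E by rewrite (proj2 (hu j)).
  have Pcj j : P (lam j @^-1` ~` Q) = (1 - p)%:E.
    by rewrite -preimage_setC probability_setC ?Pj //; exact: mpre.
  have [y [yE y0 y1 yA]] : exists y, [/\ area (Q `&` Omega) = y, 0 <= y, y <= 1 & y <= A].
    have LO : leb2 Omega = A%:E.
      rewrite /A /area in A0 *; move: A0; case: (leb2 Omega) => //=; by rewrite ltxx.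
    have h1 : (leb2 (Q `&` Omega) <= 1)%E by rewrite -(@leb2_Q1 R m); apply: leb2_mono; apply: subIsetl.
    have h2 : (leb2 (Q `&` Omega) <= A%:E)%E by rewrite -LO; apply: leb2_mono; apply: subIsetr.
    have h0 : (0 <= leb2 (Q `&` Omega))%E by apply: measure_ge0.
    rewrite /area; move: h0 h1 h2; case: (leb2 (Q `&` Omega)) => //= y.
    by rewrite !lee_fin => *; exists y.
  have p0 : 0 <= p by rewrite /p yE divr_ge0 // ltW.
  have p1 : p <= 1 by rewrite /p yE ler_pdivrMr // mul1r.
  have pA : p <= A^-1 by rewrite /p yE ler_pdivrMr // mulVf // lt0r_neq0.
  pose B (f : {ffun 'I_r -> bool}) j := if f j then Q else ~` Q.
  pose Af f := [set w | forall j, B f j (lam j w)].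
  have mB f j : measurable (B f j) by rewrite /B; case: (f j) => //; exact: measurableC.
  have PAf f : P (Af f) = (\prod_(j < r) (if f j then p else 1 - p))%:E.
    rewrite /Af hind //; congr EFin; apply: eq_bigr => j _; rewrite /B.
    by case: (f j); rewrite ?Pj ?Pcj.
  have mAf f : measurable (Af f).
    have -> : Af f = \big[setI/setT]_(j <- index_enum 'I_r) lam j @^-1` B f j.
      apply/seteqP; split => w.
        by move=> H; apply/bigI_mem => j _; exact: H.
      by move/bigI_mem => H j; apply: H; rewrite mem_index_enum.
    by apply: bigsetI_measurable => j _; apply: mpre.
  have CE : C m = \big[setU/set0]_(f <- index_enum {ffun 'I_r -> bool} |
                     a * r%:R < #|[set j | f j]|%:R) Af f.
    apply/seteqP; split => w.
      move=> Cw; apply/bigU_mem; exists [ffun j => `[< Q (lam j w) >]]; split.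
      - by rewrite mem_index_enum.
      - rewrite (_ : [set j | [ffun j => `[< Q (lam j w) >]] j] = [set j | `[< Q (lam j w) >]]).
          exact: Cw.
        by apply/seteqP; split => j /=; rewrite ffunE.
      - by move=> j; rewrite /B ffunE; case: asboolP.
    case/bigU_mem => f [_ cf Afw]; rewrite /C /count_in /=.
    rewrite (_ : [set j | `[< Q (lam j w) >]] = [set j | f j]) //.
    apply/seteqP; split => j /=; move: (Afw j); rewrite /B; case: (f j) => //.
      by move=> H /asboolP.
    by move=> H _; apply/asboolP.
  split; first by rewrite CE; apply: bigsetU_measurable => f _.
  rewrite CE; apply: (le_trans (@mu_bigU _ _ _ P _ _ _ _ mAf)).
  rewrite (eq_bigr _ (fun f _ => PAf f)) sumEFin lee_fin.
  apply: (le_trans (@chernoff_real R r p t (a * r%:R) p0 p1 (ltW t0))).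
  set x := p * (expR t - 1).
  have x0 : 0 <= x by rewrite /x mulr_ge0 // subr_ge0 et ltW.
  have -> : p * expR t + (1 - p) = 1 + x by rewrite /x; ring.
  have k : p * (a * A - 1) <= a - A^-1.
    apply: (le_trans (ler_wpM2r _ pA)); first by rewrite subr_ge0 ltW.
    by rewrite mulrBr mulrCA mulVf ?lt0r_neq0 // mulr1 mulr1.
  have k' := ler_wpM2l (ler0n _ r) k.
  apply: (@le_trans _ _ (expR (- (t * (a * r%:R))) * expR (r%:R * x))).
    apply: ler_wpM2l; first exact: expR_ge0.
    rewrite expRM_natl; apply: lerXn2r; rewrite ?nnegrE ?expR_ge0 ?addr_ge0 //.
    exact: expR_ge1Dx.
  rewrite -expRD /bound ler_expR /x et -/t.
  lra.
pose G := \big[setU/set0]_(m <- M) @Q1 R m.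
pose L := \big[setU/set0]_(m <- M) @lines R m.
have mG : measurable G by apply: bigsetU_measurable => m _; exact: Q1_meas.
have mL : measurable L by apply: bigsetU_measurable => m _; exact: mlines.
have OG : Omega `<=` G.
  move=> x /OM [m Mm Qx]; apply/bigU_mem; exists m; split => //.
have L0 : leb2 L = 0%E.
  apply: mu_bigU0 => m; first exact: mlines.
  have h := @leb2_lines R m; done.
have null j : P (lam j @^-1` ~` (G `\` L)) = 0%E.
  have m1 : measurable (lam j @^-1` ~` G) by apply: mpre; exact: measurableC.
  have m2 : measurable (lam j @^-1` L) by exact: mpre.
  have e1 : P (lam j @^-1` ~` G) = 0%E.
    rewrite (proj2 (hu j)); last exact: measurableC.
    have -> : ~` G `&` Omega = set0 by apply/seteqP; split => x // [nG /OG].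
    have h0 : leb2 (@set0 (R * R)) = 0%E by apply: measure0.
    by rewrite /area h0 /= mul0r.
  have e2 : P (lam j @^-1` L) = 0%E.
    rewrite (proj2 (hu j)) //.
    have h0 : leb2 (L `&` Omega) = 0%E.
      apply/eqP; rewrite eq_le measure_ge0 andbT.
      by have := @leb2_mono R _ _ (@subIsetl _ L Omega); rewrite L0.
    by rewrite /area h0 /= mul0r.
  by rewrite setCD preimage_setU; apply: mu_U0.
have cnt_le m w : (count_in lam m w <= r)%N.
  by rewrite /count_in; apply: leq_trans (max_card _) _; rewrite card_ord.
have N0E w : a * r%:R < N0 lam w <-> exists m, C m w.
  rewrite /N0; set S := [set _ | m in _].
  have S0 : S !=set0 by exists (count_in lam (0,0) w)%:R; exists (0,0).
  have Sub : has_ubound S by exists r%:R => _ [m _ <-]; rewrite ler_nat.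
  split.
    by move/(sup_gt S0) => [_ [m _ <-] h]; exists m.
  by case=> m Cm; apply: (lt_le_trans Cm); apply: ub_le_sup => //; exists m.
have EE : [set w | a * r%:R < N0 lam w] = \bigcup_(m : int * int) C m.
  apply/seteqP; split => w /=.
    by move/N0E => [m Cm]; exists m.
  by case=> m _ Cm; apply/N0E; exists m.
have mE : measurable [set w | a * r%:R < N0 lam w].
  rewrite EE; apply: countable_bigcupT_measurable; first exact: countableP.
  by move=> m; exact: (chern m).1.
pose X := \big[setU/set0]_(m <- M) C m.
pose Y := \big[setU/set0]_(j <- index_enum 'I_r) lam j @^-1` ~` (G `\` L).
have mX : measurable X by apply: bigsetU_measurable => m _; exact: (chern m).1.
have mY : measurable Y by apply: bigsetU_measurable => j _; apply: mpre; apply: measurableC; exact: measurableD.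
have sub : [set w | a * r%:R < N0 lam w] `<=` X `|` Y.
  move=> w /N0E [m Cm].
  case: (pselect (forall j, (G `\` L) (lam j w))) => H; last first.
    right; apply/bigU_mem; have [j Hj] : exists j, ~ (G `\` L) (lam j w) by apply/existsNP.
    by exists j; split; rewrite ?mem_index_enum.
  left; apply/bigU_mem; exists m; split => //.
  have : (0 < count_in lam m w)%N.
    rewrite -(ltr_nat R); apply: le_lt_trans Cm; by rewrite mulr_ge0 // ltW.
  case/card_gt0P => j; rewrite in_setE /= => /asboolP Qj.
  have [/bigU_mem [m' [Mm' _ Qm']] nL] := H j.
  have nl : ~ @lines R m' (lam j w) by move=> l; apply: nL; apply/bigU_mem; exists m'.
  by rewrite (@same_sq R _ _ _ Qj Qm' nl).
apply: (le_trans (le_measure _ _ _ sub)); rewrite ?inE //; first exact: measurableU.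
have Y0 : P Y = 0%E.
  apply: mu_bigU0 => j; last exact: null.
  by apply: mpre; apply: measurableC; exact: measurableD.
apply: (@le_trans _ _ (P X + P Y)%E); first by apply: measureU2.
rewrite Y0 adde0.
apply: (le_trans (@mu_bigU _ _ _ P _ _ _ _ (fun m => (chern m).1))).
apply: (@le_trans _ _ (\sum_(m <- M) bound%:E)).
  by apply: lee_sum => m _; exact: (chern m).2.
rewrite sumEFin lee_fin sum_const_seq.
by apply: ler_wpM2r => //; exact: expR_ge0.
Qed.
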